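(* Let $\mathcal{H}_W,\mathcal{H}_A,\mathcal{H}_Y$ be finite-dimensional Hilbert spaces, let $|\phi\rangle\in\mathcal{H}_A$ be a unit vector, and let $\mathcal{S}_3:\mathrm{CPTP}(\mathcal{H}_W\otimes\mathcal{H}_A,\mathcal{H}_Y)\to\mathrm{CPTP}(\mathcal{H}_W,\mathcal{H}_Y)$ be the supermap $\mathcal{S}_3(\mathcal{N})(\rho)=\mathcal{N}(\rho\otimes|\phi\rangle\langle\phi|)$. Define the maps on operators on $\mathcal{H}_A$: $\mathcal{J}_1(\sigma)=|\phi\rangle\langle\phi|\sigma|\phi\rangle\langle\phi|$ and $\mathcal{J}_0(\sigma)=(\mathbb{1}_A-|\phi\rangle\langle\phi|)\sigma(\mathbb{1}_A-|\phi\rangle\langle\phi|)$, and let $\mathcal{J}=\mathcal{J}_1+\mathcal{J}_0$. Let $\Gamma\in\mathrm{CPTP}(\mathcal{H}_W\otimes\mathcal{H}_A,\mathcal{H}_Y)$ and let $\tau$ be a fixed density operator on $\mathcal{H}_W$. Define, for $\mathcal{M}\in\mathrm{CPTP}(\mathcal{H}_W,\mathcal{H}_Y)$, $$\mathcal{R}(\mathcal{M}):=\mathcal{M}\otimes(\mathrm{Tr}_A\circ\mathcal{J}_1)+\mathrm{Tr}[\mathcal{M}(\tau)]\,\Gamma\circ(\mathcal{I}_W\otimes\mathcal{J}_0),$$ i.e. $\mathcal{R}(\mathcal{M})(\rho_W\otimes\sigma_A)=\mathrm{Tr}[\mathcal{J}_1(\sigma_A)]\,\mathcal{M}(\rho_W)+\mathrm{Tr}[\mathcal{M}(\tau)]\,\Gamma(\rho_W\otimes\mathcal{J}_0(\sigma_A))$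 extended linearly. Then $\mathcal{R}$ is a superchannel from $\mathrm{CPTP}(\mathcal{H}_W,\mathcal{H}_Y)$ to $\mathrm{CPTP}(\mathcal{H}_W\otimes\mathcal{H}_A,\mathcal{H}_Y)$. Moreover, if $\Gamma\circ(\mathcal{I}_W\otimes\mathcal{J})=\Gamma$, then $\mathcal{R}(\mathcal{S}_3(\Gamma))=\Gamma$.
   Context: $\mathrm{CPTP}(\mathcal{H},\mathcal{K})$ denotes the set of quantum channels from operators on $\mathcal{H}$ to operators on $\mathcal{K}$; $\mathcal{I}_W$ is the identity channel on $\mathcal{H}_W$. A superchannel is a linear map on linear maps sending channels to channels that can be realized as $\mathcal{N}\mapsto\mathcal{E}_{\rm post}\circ(\mathcal{N}\otimes\mathcal{I}_M)\circ\mathcal{E}_{\rm pre}$ for some ancilla system $M$ and quantum channels $\mathcal{E}_{\rm pre},\mathcal{E}_{\rm post}$ (i.e. it is deterministically implementable given one black-box use of the input channel). *)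

(* Defs.v *)
From HB Require Import structures.
From mathcomp Require Import all_boot all_order all_algebra.
From mathcomp Require Export mxtens.
Set Implicit Arguments. Unset Strict Implicit. Unset Printing Implicit Defensive.
Import Order.TTheory GRing.Theory Num.Theory.
Local Open Scope ring_scope.

Section QDefs.
Variable C : numClosedFieldType.

Definition adjmx m n (A : 'M[C]_(m, n)) : 'M[C]_(n, m) := (map_mx (fun x => x^*) A)^T.

Definition psd n (A : 'M[C]_n) : Prop :=
  forall v : 'cV[C]_n, 0 <= (adjmx v *m A *m v) 0 0.

Definition density n (rho : 'M[C]_n) : Prop := psd rho /\ \tr rho = 1.

(* Tensor product f (x) g of two maps on operators, defined as the linear
   extension of  E_ij (x) E_ab |-> f(E_ij) (x) g(E_ab)
   (Kronecker convention of mxtens: first factor is the major index). *)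
Definition tmap n m p q (f : 'M[C]_n -> 'M[C]_m) (g : 'M[C]_p -> 'M[C]_q)
  (X : 'M[C]_(n * p)) : 'M[C]_(m * q) :=
  \sum_(i < n) \sum_(j < n) \sum_(a < p) \sum_(b < p)
     X (mxtens_index (i, a)) (mxtens_index (j, b)) *:
       (f (delta_mx i j) *t g (delta_mx a b)).

(* Tensor product f (x) g where g is scalar-valued (output space C = trivial
   one-dimensional system), identified with a map into 'M_m. *)
Definition tmap_scal n m p (f : 'M[C]_n -> 'M[C]_m) (g : 'M[C]_p -> C)
  (X : 'M[C]_(n * p)) : 'M[C]_m :=
  \sum_(i < n) \sum_(j < n) \sum_(a < p) \sum_(b < p)
     X (mxtens_index (i, a)) (mxtens_index (j, b)) *:
       (g (delta_mx a b) *: f (delta_mx i j)).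

Definition idmap n : 'M[C]_n -> 'M[C]_n := fun X => X.

Definition CP n m (f : 'M[C]_n -> 'M[C]_m) : Prop :=
  forall k (X : 'M[C]_(n * k)), psd X -> psd (tmap f (@idmap k) X).

Definition TP n m (f : 'M[C]_n -> 'M[C]_m) : Prop :=
  forall X, \tr (f X) = \tr X.

Definition channel n m (f : 'M[C]_n -> 'M[C]_m) : Prop :=
  linear f /\ CP f /\ TP f.

Definition superchannel n m n' m'
  (S : ('M[C]_n -> 'M[C]_m) -> ('M[C]_n' -> 'M[C]_m')) : Prop :=
  exists k (Epre : 'M[C]_n' -> 'M[C]_(n * k)) (Epost : 'M[C]_(m * k) -> 'M[C]_m'),
    [/\ channel Epre, channel Epost &
        forall N : 'M[C]_n -> 'M[C]_m, linear N ->
          forall X, S N X = Epost (tmap N (@idmap k) (Epre X))].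

Definition projphi dA (phi : 'cV[C]_dA) : 'M[C]_dA := phi *m adjmx phi.

Definition J1 dA (phi : 'cV[C]_dA) (s : 'M[C]_dA) : 'M[C]_dA :=
  projphi phi *m s *m projphi phi.

Definition J0 dA (phi : 'cV[C]_dA) (s : 'M[C]_dA) : 'M[C]_dA :=
  (1%:M - projphi phi) *m s *m (1%:M - projphi phi).

Definition Jmap dA (phi : 'cV[C]_dA) (s : 'M[C]_dA) : 'M[C]_dA :=
  J1 phi s + J0 phi s.

Definition S3 dW dA dY (phi : 'cV[C]_dA) (N : 'M[C]_(dW * dA) -> 'M[C]_dY)
  : 'M[C]_dW -> 'M[C]_dY :=
  fun rho => N (rho *t projphi phi).

Definition Rsuper dW dA dY (phi : 'cV[C]_dA) (Gamma : 'M[C]_(dW * dA) -> 'M[C]_dY)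
  (tau : 'M[C]_dW) (M : 'M[C]_dW -> 'M[C]_dY) : 'M[C]_(dW * dA) -> 'M[C]_dY :=
  fun X => tmap_scal M (fun s => \tr (J1 phi s)) X
           + \tr (M tau) *: Gamma (tmap (@idmap dW) (J0 phi) X).

End QDefs.

(* Main.v *)
Require Import Defs.
From HB Require Import structures.
From mathcomp Require Import all_boot all_order all_algebra.
From mathcomp Require Import mxtens ring spectral sesquilinear.
From Stdlib Require Import FunctionalExtensionality.
Set Implicit Arguments. Unset Strict Implicit. Unset Printing Implicit Defensive.
Import Order.TTheory GRing.Theory Num.Theory.
Local Open Scope ring_scope.

Section Basic.
Variable C : numClosedFieldType.

Lemma sum_tens (m n : nat) (F : 'I_(m * n) -> C) :
  \sum_(k < m * n) F k = \sum_(i < m) \sum_(j < n) F (mxtens_index (i, j)).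
Proof.
rewrite pair_big /=.
rewrite (reindex (@mxtens_index m n)) /=; last first.
  by exists (@mxtens_unindex m n) => x _; [apply: mxtens_indexK | apply: mxtens_unindexK].
by apply: eq_bigr => -[i j].
Qed.

Lemma sum_tens_mx (m n p q : nat) (F : 'I_(m * n) -> 'M[C]_(p, q)) :
  \sum_(k < m * n) F k = \sum_(i < m) \sum_(j < n) F (mxtens_index (i, j)).
Proof.
rewrite pair_big /=.
rewrite (reindex (@mxtens_index m n)) /=; last first.
  by exists (@mxtens_unindex m n) => x _; [apply: mxtens_indexK | apply: mxtens_unindexK].
by apply: eq_bigr => -[i j].
Qed.

Lemma adjmxE m n (A : 'M[C]_(m, n)) i j : adjmx A i j = (A j i)^*.
Proof. by rewrite !mxE. Qed.

Lemma adjmx_mul m n p (A : 'M[C]_(m, n)) (B : 'M[C]_(n, p)) :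
  adjmx (A *m B) = adjmx B *m adjmx A.
Proof.
apply/matrixP => i j; rewrite !mxE rmorph_sum; apply: eq_bigr => k _.
by rewrite !mxE rmorphM mulrC.
Qed.

Lemma adjmxK m n (A : 'M[C]_(m, n)) : adjmx (adjmx A) = A.
Proof. by apply/matrixP => i j; rewrite !mxE conjCK. Qed.

Lemma adjmxD m n (A B : 'M[C]_(m, n)) : adjmx (A + B) = adjmx A + adjmx B.
Proof. by apply/matrixP => i j; rewrite !mxE rmorphD. Qed.

Lemma adjmxZ m n c (A : 'M[C]_(m, n)) : adjmx (c *: A) = c^* *: adjmx A.
Proof. by apply/matrixP => i j; rewrite !mxE rmorphM. Qed.

Lemma adjmx_tens m n p q (A : 'M[C]_(m, n)) (B : 'M[C]_(p, q)) :
  adjmx (A *t B) = adjmx A *t adjmx B.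
Proof. by apply/matrixP => i j; rewrite !mxE rmorphM. Qed.

Lemma adjmx1 n : adjmx (1%:M : 'M[C]_n) = 1%:M.
Proof. by apply/matrixP => i j; rewrite !mxE rmorph_nat eq_sym. Qed.

Lemma psd_conj m n (K : 'M[C]_(m, n)) (A : 'M[C]_n) :
  psd A -> psd (K *m A *m adjmx K).
Proof.
move=> pA v; have := pA (adjmx K *m v).
by rewrite adjmx_mul adjmxK !mulmxA.
Qed.

Lemma psd_add n (A B : 'M[C]_n) : psd A -> psd B -> psd (A + B).
Proof.
move=> pA pB v; rewrite mulmxDr mulmxDl mxE addr_ge0 //.
Qed.

Lemma psd0 n : psd (0 : 'M[C]_n).
Proof. by move=> v; rewrite mulmx0 mul0mx mxE. Qed.

Lemma psd_sum n (I : finType) (F : I -> 'M[C]_n) :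
  (forall i, psd (F i)) -> psd (\sum_i F i).
Proof.
move=> pF; apply: (big_ind (fun A => psd A)) => //; [exact: psd0 | exact: psd_add].
Qed.

Lemma psd_scale n c (A : 'M[C]_n) : 0 <= c -> psd A -> psd (c *: A).
Proof.
move=> c0 pA v; rewrite -scalemxAr -scalemxAl mxE; exact: mulr_ge0.
Qed.

End Basic.

Section Tens.
Variable C : numClosedFieldType.
Notation idx := mxtens_index.

Lemma idx_eq m n (x y : 'I_m * 'I_n) : (idx x == idx y) = (x == y).
Proof. exact: (can_eq (@mxtens_indexK m n)). Qed.

Lemma delta_tens m n p q (i : 'I_m) (j : 'I_n) (a : 'I_p) (b : 'I_q) :
  delta_mx i j *t delta_mx a b = delta_mx (idx (i, a)) (idx (j, b)) :> 'M[C]_(_, _).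
Proof.
apply/matrixP => r c; case: (mxtens_indexP r) => i' a'; case: (mxtens_indexP c) => j' b'.
rewrite tensmxE !mxE !idx_eq !xpair_eqE.
by case: (i' == i); case: (a' == a); case: (j' == j); case: (b' == b); rewrite ?mulr1 ?mulr0 ?mul0r.
Qed.

Lemma mx_decomp n p (X : 'M[C]_(n * p)) :
  X = \sum_(i < n) \sum_(j < n) \sum_(a < p) \sum_(b < p)
     X (idx (i, a)) (idx (j, b)) *: (delta_mx i j *t delta_mx a b).
Proof.
rewrite {1}(matrix_sum_delta X) sum_tens_mx; apply: eq_bigr => i _.
under eq_bigr do rewrite sum_tens_mx.
rewrite exchange_big; apply: eq_bigr => j _; apply: eq_bigr => a _.
by apply: eq_bigr => b _; rewrite delta_tens.
Qed.

Lemma tens_suml m n p q (I : Type) (r : seq I) (P : pred I) (F : I -> 'M[C]_(m, n))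
   (B : 'M[C]_(p, q)) :
  (\sum_(i <- r | P i) F i) *t B = \sum_(i <- r | P i) (F i *t B).
Proof.
apply/matrixP => x y; rewrite mxE !summxE big_distrl; apply: eq_bigr => i _.
by rewrite mxE.
Qed.

Lemma tens_sumr m n p q (I : Type) (r : seq I) (P : pred I) (F : I -> 'M[C]_(p, q))
   (A : 'M[C]_(m, n)) :
  A *t (\sum_(i <- r | P i) F i) = \sum_(i <- r | P i) (A *t F i).
Proof.
apply/matrixP => x y; rewrite mxE !summxE big_distrr; apply: eq_bigr => i _.
by rewrite mxE.
Qed.

Lemma tensZl m n p q c (A : 'M[C]_(m, n)) (B : 'M[C]_(p, q)) :
  (c *: A) *t B = c *: (A *t B).
Proof. by apply/matrixP => x y; rewrite !mxE mulrA. Qed.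

Lemma tensZr m n p q c (A : 'M[C]_(m, n)) (B : 'M[C]_(p, q)) :
  A *t (c *: B) = c *: (A *t B).
Proof. by apply/matrixP => x y; rewrite !mxE mulrCA. Qed.

Lemma tensDl m n p q (A A' : 'M[C]_(m, n)) (B : 'M[C]_(p, q)) :
  (A + A') *t B = A *t B + A' *t B.
Proof. by apply/matrixP => x y; rewrite !mxE mulrDl. Qed.

Lemma tensDr m n p q (A : 'M[C]_(m, n)) (B B' : 'M[C]_(p, q)) :
  A *t (B + B') = A *t B + A *t B'.
Proof. by apply/matrixP => x y; rewrite !mxE mulrDr. Qed.

Section Lin.
Variables (n m : nat) (f : 'M[C]_n -> 'M[C]_m) (lf : linear f).
Lemma lin0 : f 0 = 0.
Proof. have := lf 1 0 0; rewrite !scale1r addr0 => h; apply: (@addrI _ (f 0)). by rewrite addr0 -h. Qed.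
Lemma linD u v : f (u + v) = f u + f v.
Proof. by have := lf 1 u v; rewrite !scale1r. Qed.
Lemma linZ a u : f (a *: u) = a *: f u.
Proof. by have := lf a u 0; rewrite !addr0 lin0 addr0. Qed.
Lemma lin_sum (I : Type) (r : seq I) (P : pred I) (F : I -> 'M[C]_n) :
  f (\sum_(i <- r | P i) F i) = \sum_(i <- r | P i) f (F i).
Proof. exact: (big_morph f linD lin0). Qed.
End Lin.

End Tens.

Section TMap.
Variable C : numClosedFieldType.
Notation idx := mxtens_index.

Lemma tmap_tens n m p (f : 'M[C]_n -> 'M[C]_m) (lf : linear f) (A : 'M[C]_n) (B : 'M[C]_p) :
  tmap f (@idmap C p) (A *t B) = f A *t B.
Proof.
rewrite /tmap /idmap.
transitivity (\sum_(i < n) \sum_(j < n) \sum_(a < p) \sum_(b < p)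
   (A i j *: f (delta_mx i j)) *t (B a b *: delta_mx a b)).
  do 4! (apply: eq_bigr => ? _).
  by rewrite tensmxE tensZl tensZr scalerA.
rewrite [in RHS](matrix_sum_delta A) [in RHS](matrix_sum_delta B).
rewrite (lin_sum lf) tens_suml; apply: eq_bigr => i _.
rewrite (lin_sum lf) tens_suml; apply: eq_bigr => j _.
rewrite tens_sumr; apply: eq_bigr => a _.
rewrite tens_sumr; apply: eq_bigr => b _.
by rewrite (linZ lf).
Qed.

Lemma tmap_ext n m p q (f f' : 'M[C]_n -> 'M[C]_m) (g g' : 'M[C]_p -> 'M[C]_q) X :
  (forall Y, f Y = f' Y) -> (forall Y, g Y = g' Y) -> tmap f g X = tmap f' g' X.
Proof.
move=> ef eg; rewrite /tmap; do 4! (apply: eq_bigr => ? _).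
by rewrite ef eg.
Qed.

Lemma tmapD n m p q (f : 'M[C]_n -> 'M[C]_m) (g : 'M[C]_p -> 'M[C]_q) X Y :
  tmap f g (X + Y) = tmap f g X + tmap f g Y.
Proof.
rewrite /tmap -big_split; apply: eq_bigr => i _.
rewrite -big_split; apply: eq_bigr => j _.
rewrite -big_split; apply: eq_bigr => a _.
rewrite -big_split; apply: eq_bigr => b _.
by rewrite mxE scalerDl.
Qed.

Lemma tmap0 n m p q (f : 'M[C]_n -> 'M[C]_m) (g : 'M[C]_p -> 'M[C]_q) :
  tmap f g 0 = 0.
Proof.
rewrite /tmap big1 // => i _; rewrite big1 // => j _; rewrite big1 // => a _.
by rewrite big1 // => b _; rewrite mxE scale0r.
Qed.

Lemma tmapZ n m p q (f : 'M[C]_n -> 'M[C]_m) (g : 'M[C]_p -> 'M[C]_q) c X :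
  tmap f g (c *: X) = c *: tmap f g X.
Proof.
rewrite /tmap scaler_sumr; apply: eq_bigr => i _.
rewrite scaler_sumr; apply: eq_bigr => j _.
rewrite scaler_sumr; apply: eq_bigr => a _.
rewrite scaler_sumr; apply: eq_bigr => b _.
by rewrite mxE scalerA.
Qed.

Lemma tmap_sum n m p q (f : 'M[C]_n -> 'M[C]_m) (g : 'M[C]_p -> 'M[C]_q)
  (I : Type) (r : seq I) (P : pred I) (F : I -> 'M[C]_(n * p)) :
  tmap f g (\sum_(i <- r | P i) F i) = \sum_(i <- r | P i) tmap f g (F i).
Proof. exact: (big_morph _ (@tmapD _ _ _ _ f g) (tmap0 f g)). Qed.

Lemma tmap_addf n m p q (f f' : 'M[C]_n -> 'M[C]_m) (g : 'M[C]_p -> 'M[C]_q) X :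
  tmap (fun Y => f Y + f' Y) g X = tmap f g X + tmap f' g X.
Proof.
rewrite /tmap -big_split; apply: eq_bigr => i _.
rewrite -big_split; apply: eq_bigr => j _.
rewrite -big_split; apply: eq_bigr => a _.
rewrite -big_split; apply: eq_bigr => b _.
by rewrite tensDl scalerDr.
Qed.

Lemma tmap_addg n m p q (f : 'M[C]_n -> 'M[C]_m) (g g' : 'M[C]_p -> 'M[C]_q) X :
  tmap f (fun Y => g Y + g' Y) X = tmap f g X + tmap f g' X.
Proof.
rewrite /tmap -big_split; apply: eq_bigr => i _.
rewrite -big_split; apply: eq_bigr => j _.
rewrite -big_split; apply: eq_bigr => a _.
rewrite -big_split; apply: eq_bigr => b _.
by rewrite tensDr scalerDr.
Qed.

Lemma tmap_kraus n m p (K : 'M[C]_(m, n)) (X : 'M[C]_(n * p)) :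
  tmap (fun Y => K *m Y *m adjmx K) (@idmap C p) X =
  (K *t 1%:M) *m X *m adjmx (K *t 1%:M).
Proof.
rewrite [in RHS](mx_decomp X) adjmx_tens adjmx1 mulmx_sumr mulmx_suml /tmap.
apply: eq_bigr => i _; rewrite mulmx_sumr mulmx_suml; apply: eq_bigr => j _.
rewrite mulmx_sumr mulmx_suml; apply: eq_bigr => a _.
rewrite mulmx_sumr mulmx_suml; apply: eq_bigr => b _.
by rewrite -scalemxAr -scalemxAl !tensmx_mul mul1mx mulmx1.
Qed.

Lemma tmap_kraus_r n m p (K : 'M[C]_(m, p)) (X : 'M[C]_(n * p)) :
  tmap (@idmap C n) (fun Y => K *m Y *m adjmx K) X =
  (1%:M *t K) *m X *m adjmx (1%:M *t K).
Proof.
rewrite [in RHS](mx_decomp X) adjmx_tens adjmx1 mulmx_sumr mulmx_suml /tmap.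
apply: eq_bigr => i _; rewrite mulmx_sumr mulmx_suml; apply: eq_bigr => j _.
rewrite mulmx_sumr mulmx_suml; apply: eq_bigr => a _.
rewrite mulmx_sumr mulmx_suml; apply: eq_bigr => b _.
by rewrite -scalemxAr -scalemxAl !tensmx_mul mul1mx mulmx1.
Qed.

Lemma tmap_comp n m l p (f : 'M[C]_n -> 'M[C]_m) (g : 'M[C]_m -> 'M[C]_l) (lg : linear g)
  (X : 'M[C]_(n * p)) :
  tmap (fun Y => g (f Y)) (@idmap C p) X = tmap g (@idmap C p) (tmap f (@idmap C p) X).
Proof.
rewrite [X in tmap g _ X]/tmap [in LHS]/tmap.
rewrite tmap_sum; apply: eq_bigr => i _; rewrite tmap_sum; apply: eq_bigr => j _.
rewrite tmap_sum; apply: eq_bigr => a _; rewrite tmap_sum; apply: eq_bigr => b _.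
by rewrite tmapZ tmap_tens.
Qed.

Lemma CP_ext n m (f f' : 'M[C]_n -> 'M[C]_m) : (forall Y, f Y = f' Y) -> CP f -> CP f'.
Proof.
move=> e cf k X pX; rewrite -(tmap_ext X e (fun _ => erefl)); exact: cf.
Qed.

Lemma CP_kraus n m (K : 'M[C]_(m, n)) : CP (fun Y => K *m Y *m adjmx K).
Proof. by move=> k X pX; rewrite tmap_kraus; apply: psd_conj. Qed.

Lemma CP_add n m (f f' : 'M[C]_n -> 'M[C]_m) : CP f -> CP f' -> CP (fun Y => f Y + f' Y).
Proof. by move=> cf cf' k X pX; rewrite tmap_addf; apply: psd_add; [apply: cf | apply: cf']. Qed.

Lemma CP_zero n m : CP (fun _ : 'M[C]_n => 0 : 'M[C]_m).
Proof.
move=> k X pX; rewrite /tmap big1; first exact: psd0.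
move=> i _; rewrite big1 // => j _.
rewrite big1 // => a _; rewrite big1 // => b _; by rewrite tens0mx scaler0.
Qed.

Lemma CP_sum n m (I : finType) (f : I -> 'M[C]_n -> 'M[C]_m) :
  (forall i, CP (f i)) -> CP (fun Y => \sum_i f i Y).
Proof.
move=> cf; rewrite unlock /=; elim: (index_enum I) => [|x r IH] /=.
  exact: CP_zero.
exact: CP_add.
Qed.

Lemma CP_comp n m l (f : 'M[C]_n -> 'M[C]_m) (g : 'M[C]_m -> 'M[C]_l) :
  linear g -> CP f -> CP g -> CP (fun Y => g (f Y)).
Proof. by move=> lg cf cg k X pX; rewrite tmap_comp //; apply: cg; apply: cf. Qed.

End TMap.

Section Herm.
Variable C : numClosedFieldType.

Lemma e00D (X Y : 'M[C]_1) : (X + Y) 0 0 = X 0 0 + Y 0 0.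
Proof. by rewrite mxE. Qed.
Lemma e00Z c (X : 'M[C]_1) : (c *: X) 0 0 = c * X 0 0.
Proof. by rewrite mxE. Qed.

Lemma quad_exp n (A : 'M[C]_n) (u w : 'cV[C]_n) c :
  (adjmx (u + c *: w) *m A *m (u + c *: w)) 0 0 =
  (adjmx u *m A *m u) 0 0 + c^* * c * (adjmx w *m A *m w) 0 0
  + (c * (adjmx u *m A *m w) 0 0 + c^* * (adjmx w *m A *m u) 0 0).
Proof.
rewrite adjmxD adjmxZ !mulmxDl !mulmxDr -!scalemxAl -!scalemxAr !e00D !e00Z.
ring.
Qed.

Lemma bil_delta n (A : 'M[C]_n) i j :
  (adjmx (delta_mx i 0 : 'cV[C]_n) *m A *m (delta_mx j 0 : 'cV[C]_n)) 0 0 = A i j.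
Proof.
have -> : adjmx (delta_mx i 0 : 'cV[C]_n) = delta_mx 0 i.
  by apply/matrixP => x y; rewrite !mxE rmorph_nat andbC.
by rewrite -rowE -colE !mxE.
Qed.

Lemma psd_herm n (A : 'M[C]_n) : psd A -> adjmx A = A.
Proof.
move=> pA; apply/matrixP => i j; rewrite adjmxE.
pose q (v : 'cV[C]_n) := (adjmx v *m A *m v) 0 0.
have qr v : (q v)^* = q v by apply/conj_Creal/ger0_real/pA.
pose x : C := A j i; pose y : C := A i j.
have D c : c * x + c^* * y =
   q (delta_mx j 0 + c *: delta_mx i 0) - q (delta_mx j 0) - c^* * c * q (delta_mx i 0).
  by rewrite /q quad_exp !bil_delta /x /y; ring.
have r1 : (x + y)^* = x + y.
  have := D 1; rewrite rmorph1 !mul1r => ->.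
  by rewrite !rmorphB; congr (_ - _ - _); apply: qr.
have ci : ('i : C)^* * 'i = 1 by rewrite conjCi mulNr -expr2 sqrCi opprK.
have r2 : ('i * x - 'i * y)^* = 'i * x - 'i * y.
  have := D 'i; rewrite ci mul1r conjCi mulNr => ->.
  by rewrite !rmorphB; congr (_ - _ - _); apply: qr.
have {r1} r1 : x^* + y^* = x + y by have := r1; rewrite rmorphD; apply.
have {r2} r2 : - 'i * x^* - - 'i * y^* = 'i * x - 'i * y.
  by have := r2; rewrite rmorphB !rmorphM -conjCi; apply.
have i0 : ('i : C) != 0 by rewrite neq0Ci.
have h2 : 'i * (y^* - x^*) = 'i * (x - y).
  transitivity (- 'i * x^* - - 'i * y^*); first ring.
  by rewrite r2; ring.
move/(mulfI i0) in h2.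
have two0 : (2 : C) != 0 by rewrite pnatr_eq0.
apply: (mulfI two0).
transitivity ((x^* + y^*) - (y^* - x^*)); first ring.
by rewrite r1 h2 /x /y; ring.
Qed.

End Herm.

Section Spec.
Variable C : numClosedFieldType.

Lemma tE m n (M : 'M[C]_(m, n)) : (M ^t*)%sesqui = adjmx M.
Proof. by rewrite -map_trmx. Qed.

Lemma psd_decomp n (A : 'M[C]_n) : psd A ->
  exists (u : 'I_n -> 'cV[C]_n) (d : 'I_n -> C),
    (forall l, 0 <= d l) /\ A = \sum_l d l *: (u l *m adjmx (u l)).
Proof.
move=> pA; have hA := psd_herm pA.
have nA : A \is normalmx by rewrite qualifE tE hA.
have eA := orthomx_spectralP nA.
set P := spectralmx A in eA; set sp := spectral_diag A in eA.
have uP : P \is unitarymx := spectral_unitarymx A.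
rewrite invmx_unitary // tE in eA.
have PP : P *m adjmx P = 1%:M by rewrite -tE; apply/unitarymxP.
exists (fun l => adjmx (row l P)), (fun l => sp 0 l); split.
  move=> l.
  have : (P *m A *m adjmx P) l l = sp 0 l.
    by rewrite eA !mulmxA PP mul1mx -mulmxA PP mulmx1 mxE eqxx mulr1n.
  move=> <-; have := pA (adjmx (row l P)); rewrite adjmxK.
  suff -> : (P *m A *m adjmx P) l l = (row l P *m A *m adjmx (row l P)) 0 0 by [].
  rewrite -!row_mul mxE [in RHS]mxE [RHS]mxE; apply: eq_bigr => k _.
  by congr (_ * _); rewrite !mxE.
rewrite {1}eA; apply/matrixP => i j.
rewrite mul_mx_diag !mxE summxE; apply: eq_bigr => k _.
by rewrite !mxE big_ord1 !mxE conjCK; ring.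
Qed.

End Spec.

Section Helpers.
Variable C : numClosedFieldType.
Notation idx := mxtens_index.

Lemma sum_ind (I : finType) (j : I) (F : I -> C) :
  \sum_i (i == j)%:R * F i = F j.
Proof.
rewrite (bigD1 j) //= eqxx mul1r big1 ?addr0 // => i /negbTE ->.
by rewrite mul0r.
Qed.

Lemma sum_ind' (I : finType) (j : I) (F : I -> C) :
  \sum_i (j == i)%:R * F i = F j.
Proof. by under eq_bigr do rewrite eq_sym; apply: sum_ind. Qed.

Definition Sel m n (f : 'I_m -> 'I_n) : 'M[C]_(m, n) := \matrix_(i, j) (j == f i)%:R.

Lemma Sel_conj m n (f : 'I_m -> 'I_n) (Y : 'M[C]_n) i i' :
  (Sel f *m Y *m adjmx (Sel f)) i i' = Y (f i) (f i').
Proof.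
rewrite mxE (bigD1 (f i')) //= big1 ?addr0.
  rewrite !mxE eqxx rmorph1 mulr1 (bigD1 (f i)) //= big1 ?addr0.
    by rewrite mxE eqxx mul1r.
  by move=> c /negbTE hc; rewrite mxE hc mul0r.
move=> c /negbTE hc; rewrite !mxE hc rmorph0 mulr0 //.
Qed.

Lemma Sel_adj_conj m n (f : 'I_m -> 'I_n) (G : 'M[C]_m) r r' :
  (adjmx (Sel f) *m G *m Sel f) r r' =
  \sum_s \sum_s' ((r == f s) && (r' == f s'))%:R * G s s'.
Proof.
rewrite mxE exchange_big; apply: eq_bigr => s' _.
rewrite mxE big_distrl; apply: eq_bigr => s _ /=.
by rewrite !mxE rmorph_nat -mulnb natrM; ring.
Qed.

Lemma Sel_adj_conj_in m n (f : 'I_m -> 'I_n) (finj : injective f) (G : 'M[C]_m) s s' :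
  (adjmx (Sel f) *m G *m Sel f) (f s) (f s') = G s s'.
Proof.
rewrite Sel_adj_conj (bigD1 s) //= [X in _ + X]big1 ?addr0.
  rewrite (bigD1 s') //= [X in _ + X]big1 ?addr0; first by rewrite !eqxx mul1r.
  by move=> t /negbTE ht; rewrite !(inj_eq finj) (eq_sym s') ht andbF mul0r.
move=> t /negbTE ht; rewrite big1 // => t' _.
by rewrite !(inj_eq finj) (eq_sym s) ht mul0r.
Qed.

Lemma Sel_adj_conj_out m n (f : 'I_m -> 'I_n) (G : 'M[C]_m) r :
  (forall s, r != f s) -> (adjmx (Sel f) *m G *m Sel f) r r = 0.
Proof.
move=> hr; rewrite Sel_adj_conj big1 // => s _; rewrite big1 // => s' _.
by rewrite (negbTE (hr s)) mul0r.
Qed.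

Lemma Sel_unit m n (f : 'I_m -> 'I_n) (finj : injective f) :
  Sel f *m adjmx (Sel f) = 1%:M.
Proof.
apply/matrixP => i i'; have := Sel_conj f 1%:M i i'; rewrite mulmx1 => ->.
by rewrite !mxE (inj_eq finj).
Qed.

Lemma trace_tens m n (A : 'M[C]_m) (B : 'M[C]_n) : \tr (A *t B) = \tr A * \tr B.
Proof.
rewrite /mxtrace sum_tens mulr_suml; apply: eq_bigr => i _.
rewrite mulr_sumr; apply: eq_bigr => a _; by rewrite tensmxE.
Qed.

Lemma tens11 m n : (1%:M : 'M[C]_m) *t (1%:M : 'M[C]_n) = 1%:M.
Proof.
apply/matrixP => r c; case: (mxtens_indexP r) => i a; case: (mxtens_indexP c) => j b.
rewrite tensmxE !mxE idx_eq xpair_eqE.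
by case: (i == j); case: (a == b); rewrite ?mulr1 ?mulr0 ?mul0r.
Qed.

Lemma lin_kraus m n (K : 'M[C]_(m, n)) : linear (fun Y => K *m Y *m adjmx K).
Proof.
by move=> a u v /=; rewrite mulmxDr mulmxDl -scalemxAr -scalemxAl.
Qed.

Lemma CP_scale n m (f : 'M[C]_n -> 'M[C]_m) c : 0 <= c -> CP f -> CP (fun Y => c *: f Y).
Proof.
move=> c0 cf k X pX.
have -> : tmap (fun Y => c *: f Y) (@idmap C k) X = c *: tmap f (@idmap C k) X.
  rewrite /tmap scaler_sumr; apply: eq_bigr => i _.
  rewrite scaler_sumr; apply: eq_bigr => j _.
  rewrite scaler_sumr; apply: eq_bigr => a _.
  rewrite scaler_sumr; apply: eq_bigr => b _.
  by rewrite tensZl !scalerA mulrC.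
by apply: psd_scale => //; apply: cf.
Qed.

End Helpers.

Section Phi.
Variable C : numClosedFieldType.
Variables (dW dA : nat) (phi : 'cV[C]_dA).
Hypothesis hphi : (adjmx phi *m phi) 0 0 = 1.
Notation idx := mxtens_index.
Notation P := (projphi phi).

Lemma phi_norm : adjmx phi *m phi = 1%:M.
Proof. by apply/matrixP => i j; rewrite !ord1 hphi mxE eqxx. Qed.

Lemma P_idem : P *m P = P.
Proof. by rewrite /projphi mulmxA -(mulmxA phi) phi_norm mulmx1. Qed.

Lemma P_herm : adjmx P = P.
Proof. by rewrite /projphi adjmx_mul adjmxK. Qed.

Lemma trP : \tr P = 1.
Proof. by rewrite /projphi mxtrace_mulC phi_norm mxtrace1. Qed.

Lemma P_entry a b : P a b = phi a 0 * (phi b 0)^*.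
Proof. by rewrite !mxE big_ord1 !mxE. Qed.

Definition Qm : 'M[C]_dA := 1%:M - P.

Lemma Q_herm : adjmx Qm = Qm.
Proof.
have aN : adjmx (- P) = - adjmx P by apply/matrixP => i j; rewrite !mxE rmorphN.
by rewrite /Qm adjmxD adjmx1 aN P_herm.
Qed.

Lemma Q_idem : Qm *m Qm = Qm.
Proof.
by rewrite /Qm mulmxBl mul1mx mulmxBr mulmx1 P_idem subrr subr0.
Qed.

Lemma J1_delta a b : P *m delta_mx a b *m P = ((phi a 0)^* * phi b 0) *: P.
Proof.
have h : adjmx phi *m delta_mx a b *m phi = ((phi a 0)^* * phi b 0)%:M.
  rewrite -(@mul_delta_mx _ dA 1 dA (0 : 'I_1) a b) mulmxA -colE -mulmxA -rowE.
  by apply/matrixP => i j; rewrite !ord1 !mxE big_ord1 !mxE.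
rewrite /projphi.
transitivity (phi *m (adjmx phi *m delta_mx a b *m phi) *m adjmx phi).
  by rewrite !mulmxA.
by rewrite h mul_mx_scalar -scalemxAl.
Qed.

Lemma trJ1_delta a b : \tr (J1 phi (delta_mx a b)) = (phi a 0)^* * phi b 0.
Proof. by rewrite /J1 J1_delta mxtraceZ trP mulr1. Qed.

Definition rho1 (X : 'M[C]_(dW * dA)) : 'M[C]_dW :=
  \sum_(i < dW) \sum_(j < dW) \sum_(a < dA) \sum_(b < dA)
     (X (idx (i, a)) (idx (j, b)) * ((phi a 0)^* * phi b 0)) *: delta_mx i j.

Lemma rho1_entry X w w' :
  rho1 X w w' = \sum_(a < dA) \sum_(b < dA) X (idx (w, a)) (idx (w', b)) * ((phi a 0)^* * phi b 0).
Proof.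
rewrite /rho1 summxE (bigD1 w) //= [X in _ + X]big1 ?addr0; last first.
  move=> i /negbTE hi; rewrite summxE big1 // => j _; rewrite summxE big1 // => a _.
  by rewrite summxE big1 // => b _; rewrite !mxE (eq_sym w) hi mulr0.
rewrite summxE (bigD1 w') //= [X in _ + X]big1 ?addr0; last first.
  move=> j /negbTE hj; rewrite summxE big1 // => a _.
  by rewrite summxE big1 // => b _; rewrite !mxE (eq_sym w') hj andbF mulr0.
rewrite summxE; apply: eq_bigr => a _; rewrite summxE; apply: eq_bigr => b _.
by rewrite !mxE !eqxx mulr1.
Qed.

Lemma rho1D X Y : rho1 (X + Y) = rho1 X + rho1 Y.
Proof. apply/matrixP => w w'; rewrite [RHS]mxE !rho1_entry -!big_split; apply: eq_bigr => a _.
  rewrite -big_split; apply: eq_bigr => b _; by rewrite mxE mulrDl. Qed.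

Lemma rho1Z c X : rho1 (c *: X) = c *: rho1 X.
Proof. apply/matrixP => w w'; rewrite [RHS]mxE !rho1_entry mulr_sumr; apply: eq_bigr => a _.
  rewrite mulr_sumr; apply: eq_bigr => b _; by rewrite mxE !mulrA. Qed.

Lemma tmap_scal_rho1 m (N : 'M[C]_dW -> 'M[C]_m) (lN : linear N) X :
  tmap_scal N (fun s => \tr (J1 phi s)) X = N (rho1 X).
Proof.
rewrite /tmap_scal /rho1 (lin_sum lN); apply: eq_bigr => i _.
rewrite (lin_sum lN); apply: eq_bigr => j _.
rewrite (lin_sum lN); apply: eq_bigr => a _.
rewrite (lin_sum lN); apply: eq_bigr => b _.
by rewrite (linZ lN) trJ1_delta scalerA.
Qed.

Lemma tmapJ1 X : tmap (@idmap C dW) (J1 phi) X = rho1 X *t P.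
Proof.
rewrite /tmap /rho1 tens_suml; apply: eq_bigr => i _.
rewrite tens_suml; apply: eq_bigr => j _.
rewrite tens_suml; apply: eq_bigr => a _.
rewrite tens_suml; apply: eq_bigr => b _.
by rewrite /J1 J1_delta tensZl tensZr scalerA /idmap.
Qed.

Lemma J0_kraus s : J0 phi s = Qm *m s *m adjmx Qm.
Proof. by rewrite Q_herm. Qed.

Lemma tmapJ0 X : tmap (@idmap C dW) (J0 phi) X =
   (1%:M *t Qm) *m X *m adjmx (1%:M *t Qm).
Proof. by rewrite -tmap_kraus_r; apply: tmap_ext => // Y; rewrite J0_kraus. Qed.

Lemma tr_rho1_G X :
  \tr (rho1 X) + \tr (tmap (@idmap C dW) (J0 phi) X) = \tr X.
Proof.
rewrite tmapJ0 mxtrace_mulC mulmxA adjmx_tens adjmx1 Q_herm tensmx_mul mul1mx Q_idem.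
have -> : (1%:M : 'M[C]_dW) *t Qm = 1%:M - 1%:M *t P.
  by rewrite /Qm -tens11; apply/matrixP => r c; rewrite !mxE mulrBr.
rewrite mulmxBl mul1mx raddfB /= addrC -addrA.
suff -> : \tr (rho1 X) = \tr ((1%:M *t P) *m X) by rewrite addNr addr0.
rewrite /mxtrace sum_tens; apply: eq_bigr => w _; rewrite rho1_entry.
rewrite exchange_big; apply: eq_bigr => b _.
rewrite mxE sum_tens (bigD1 w) //= [X in _ + X]big1 ?addr0; last first.
  by move=> w' /negbTE hw; rewrite big1 // => a _; rewrite tensmxE mxE eq_sym hw mul0r mul0r.
apply: eq_bigr => a _; rewrite tensmxE mxE eqxx mul1r P_entry; ring.
Qed.

End Phi.

Section Gen.
Variable C : numClosedFieldType.
Notation idx := mxtens_index.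

Lemma kraus_entry m n (K : 'M[C]_(m, n)) (X : 'M[C]_n) r r' :
  (K *m X *m adjmx K) r r' = \sum_c \sum_c' K r c * X c c' * (K r' c')^*.
Proof.
rewrite mxE exchange_big; apply: eq_bigr => c' _.
rewrite mxE big_distrl; apply: eq_bigr => c _ /=.
by rewrite !mxE.
Qed.

Lemma CP_tensl n k (A : 'M[C]_n) : psd A -> CP (fun Z : 'M[C]_k => A *t Z).
Proof.
move=> pA; have [u [d [d0 eA]]] := psd_decomp pA.
pose K l : 'M[C]_(n * k, k) :=
  \matrix_(r, s) (u l (mxtens_unindex r).1 0 * (((mxtens_unindex r).2 == s)%:R)).
apply: (@CP_ext _ _ _ (fun Z => \sum_l d l *: (K l *m Z *m adjmx (K l)))).
  move=> Z; apply/matrixP => r c.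
  case: (mxtens_indexP r) => w i; case: (mxtens_indexP c) => w' i'.
  rewrite tensmxE eA summxE summxE big_distrl; apply: eq_bigr => l _.
  rewrite [LHS]mxE kraus_entry.
  rewrite (bigD1 i) //= [X in _ + X]big1 ?addr0; last first.
    move=> s /negbTE hs; rewrite big1 // => s' _.
    by rewrite !mxE mxtens_indexK /= (eq_sym i) hs mulr0 !mul0r.
  rewrite (bigD1 i') //= [X in _ + X]big1 ?addr0; last first.
    move=> s /negbTE hs.
    by rewrite !mxE !mxtens_indexK /= (eq_sym i') hs mulr0 rmorph0 mulr0.
  rewrite !mxE !mxtens_indexK /= !eqxx !mulr1 big_ord1 !mxE; ring.
apply: CP_sum => l; apply: CP_scale => //; exact: CP_kraus.
Qed.

Lemma lin_tensl n k (A : 'M[C]_n) : linear (fun Z : 'M[C]_k => A *t Z).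
Proof. by move=> a u v; rewrite tensDr tensZr. Qed.

Lemma CP_kraus_adj m n (K : 'M[C]_(m, n)) : CP (fun Y => adjmx K *m Y *m K).
Proof.
apply: (@CP_ext _ _ _ (fun Y => adjmx K *m Y *m adjmx (adjmx K))).
  by move=> Y; rewrite adjmxK.
exact: CP_kraus.
Qed.

Lemma lin_kraus_adj m n (K : 'M[C]_(m, n)) : linear (fun Y => adjmx K *m Y *m K).
Proof. by move=> a u v /=; rewrite mulmxDr mulmxDl -scalemxAr -scalemxAl. Qed.

Lemma trE00 k : \tr (delta_mx ord0 ord0 : 'M[C]_k.+1) = 1.
Proof.
rewrite /mxtrace (bigD1 ord0) //= big1 ?addr0; first by rewrite mxE !eqxx.
by move=> i /negbTE hi; rewrite mxE hi.
Qed.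

Lemma tr_Sel_conj m n (f : 'I_m -> 'I_n) (Y : 'M[C]_n) :
  \tr (Sel C f *m Y *m adjmx (Sel C f)) = \sum_i Y (f i) (f i).
Proof. by apply: eq_bigr => i _; rewrite Sel_conj. Qed.

End Gen.

Section Main.
Variable C : numClosedFieldType.
Variables (dW dA dY : nat) (phi : 'cV[C]_dA).
Hypothesis hphi : (adjmx phi *m phi) 0 0 = 1.
Variable Gamma : 'M[C]_(dW * dA) -> 'M[C]_dY.
Hypothesis hGamma : channel Gamma.
Variable tau : 'M[C]_dW.
Hypothesis htau : density tau.
Notation idx := mxtens_index.
Notation n := (dW * dA)%N.
Notation k := (dW * dA).+1.

Definition emb : 'I_n -> 'I_k := lift ord0.
Lemma emb_inj : injective emb. Proof. exact: lift_inj. Qed.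
Definition Sm : 'M[C]_(n, k) := Sel C emb.
Definition Gm (X : 'M[C]_n) : 'M[C]_n := tmap (@idmap C dW) (J0 phi) X.
Definition ZX (X : 'M[C]_n) : 'M[C]_k := adjmx Sm *m Gm X *m Sm.
Definition E00 : 'M[C]_k := delta_mx ord0 ord0.
Definition Epre (X : 'M[C]_n) : 'M[C]_(dW * k) := rho1 phi X *t E00 + tau *t ZX X.
Definition V0 : 'M[C]_(dY, dY * k) := Sel C (fun y => idx (y, ord0)).
Definition Fy (y : 'I_dY) : 'M[C]_(n, dY * k) := Sel C (fun s => idx (y, emb s)).
Definition Epost (Y : 'M[C]_(dY * k)) : 'M[C]_dY :=
  V0 *m Y *m adjmx V0 + Gamma (\sum_y Fy y *m Y *m adjmx (Fy y)).

Lemma lGamma : linear Gamma. Proof. by case: hGamma. Qed.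
Lemma cGamma : CP Gamma. Proof. by case: hGamma => _ []. Qed.
Lemma tGamma : TP Gamma. Proof. by case: hGamma => _ []. Qed.

Lemma GmD X Y : Gm (X + Y) = Gm X + Gm Y. Proof. exact: tmapD. Qed.
Lemma GmZ c X : Gm (c *: X) = c *: Gm X. Proof. exact: tmapZ. Qed.

Lemma lin_Epre : linear Epre.
Proof.
move=> a u v; rewrite /Epre /ZX GmD GmZ (rho1D phi) (rho1Z phi).
rewrite mulmxDr mulmxDl -scalemxAr -scalemxAl tensDl tensZl tensDr tensZr.
by rewrite scalerDr addrACA.
Qed.

Lemma lin_Epost : linear Epost.
Proof.
move=> a u v; rewrite /Epost.
have -> : \sum_y Fy y *m (a *: u + v) *m adjmx (Fy y) =
   a *: (\sum_y Fy y *m u *m adjmx (Fy y)) + \sum_y Fy y *m v *m adjmx (Fy y).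
  rewrite scaler_sumr -big_split; apply: eq_bigr => y _.
  by rewrite mulmxDr mulmxDl -scalemxAr -scalemxAl.
rewrite (linD lGamma) (linZ lGamma) mulmxDr mulmxDl -scalemxAr -scalemxAl.
by rewrite scalerDr addrACA.
Qed.

End Main.

Lemma sum_collapse (C : numClosedFieldType) (I : finType) (j : I) (F : I -> C) :
  (forall i, i != j -> F i = 0) -> \sum_i F i = F j.
Proof.
by move=> h; rewrite (bigD1 j) //= big1 ?addr0 // => i /h.
Qed.

Section Part1.
Variable C : numClosedFieldType.
Variables (dW dA : nat) (phi : 'cV[C]_dA).
Notation idx := mxtens_index.
Notation n := (dW * dA)%N.
Notation k := (dW * dA).+1.

Definition K1 : 'M[C]_(dW * k, n) :=
  \matrix_(r, c) ((((@mxtens_unindex dW k r).2 == ord0) &&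
                  ((@mxtens_unindex dW dA c).1 == (@mxtens_unindex dW k r).1))%:R
                  * (phi (@mxtens_unindex dW dA c).2 0)^*).

Lemma K1E w i v a : K1 (idx (w, i)) (idx (v, a)) = ((i == ord0) && (v == w))%:R * (phi a 0)^*.
Proof. by rewrite mxE !mxtens_indexK. Qed.

Lemma K1_part X : K1 *m X *m adjmx K1 = rho1 phi X *t E00 C dW dA.
Proof.
apply/matrixP => r r'; case: (mxtens_indexP r) => w i; case: (mxtens_indexP r') => w' i'.
rewrite kraus_entry tensmxE rho1_entry /E00 mxE sum_tens.
have [-> | hi] := eqVneq i ord0; last first.
  rewrite /= mulr0 big1 // => v _; rewrite big1 // => a _.
  rewrite big1 // => c' _.
  by rewrite K1E (negbTE hi) !mul0r.
have [-> | hi'] := eqVneq i' ord0; last first.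
  rewrite andbF /= mulr0 big1 // => v _; rewrite big1 // => a _.
  rewrite big1 // => c' _.
  case: (mxtens_indexP c') => v' b.
  by rewrite !K1E (negbTE hi') mul0r conjC0 mulr0.
rewrite /= mulr1 (@sum_collapse _ _ w); last first.
  move=> v hv; rewrite big1 // => a _; rewrite big1 // => c' _.
  by rewrite K1E (negbTE hv) !mul0r.
apply: eq_bigr => a _; rewrite sum_tens (@sum_collapse _ _ w'); last first.
  move=> v hv; rewrite big1 // => b _.
  by rewrite !K1E (negbTE hv) mul0r conjC0 mulr0.
apply: eq_bigr => b _; rewrite !K1E !eqxx !mul1r conjCK; ring.
Qed.

End Part1.

Section Final.
Variable C : numClosedFieldType.
Variables (dW dA dY : nat) (phi : 'cV[C]_dA).
Hypothesis hphi : (adjmx phi *m phi) 0 0 = 1.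
Variable Gamma : 'M[C]_(dW * dA) -> 'M[C]_dY.
Hypothesis hGamma : channel Gamma.
Variable tau : 'M[C]_dW.
Hypothesis htau : density tau.
Notation idx := mxtens_index.
Notation n := (dW * dA)%N.
Notation k := (dW * dA).+1.
Local Notation EpreL := (@Epre C dW dA phi tau).
Local Notation EpostL := (@Epost C dW dA dY Gamma).
Local Notation GmL := (@Gm C dW dA phi).
Local Notation SmL := (Sm C dW dA).
Local Notation E00L := (E00 C dW dA).

Lemma CP_Gm : CP GmL.
Proof.
apply: (@CP_ext _ _ _ (fun X => (1%:M *t Qm phi) *m X *m adjmx (1%:M *t Qm phi))).
  by move=> X; rewrite /Gm tmapJ0.
exact: CP_kraus.
Qed.

Lemma lin_Gm : linear GmL.
Proof. by move=> a u v; rewrite GmD GmZ. Qed.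

Lemma CP_Epre : channel EpreL.
Proof.
split; first exact: lin_Epre.
split.
  apply: (@CP_ext _ _ _ (fun X => K1 dW phi *m X *m adjmx (K1 dW phi)
            + tau *t (adjmx SmL *m GmL X *m SmL))).
    by move=> X; rewrite K1_part.
  apply: CP_add; first exact: CP_kraus.
  apply: (@CP_comp _ _ _ _ (fun X => adjmx SmL *m GmL X *m SmL) (fun Z => tau *t Z)).
  - exact: lin_tensl.
  - apply: (@CP_comp _ _ _ _ GmL (fun Y => adjmx SmL *m Y *m SmL)).
    + exact: lin_kraus_adj.
    + exact: CP_Gm.
    + exact: CP_kraus_adj.
  - by apply: CP_tensl; case: htau.
move=> X; rewrite /Epre mxtraceD !trace_tens trE00 mulr1.
have [_ ->] := htau; rewrite mul1r /ZX mxtrace_mulC mulmxA.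
rewrite /Sm Sel_unit ?mul1mx; last exact: emb_inj.
exact: tr_rho1_G.
Qed.

Lemma CP_Epost : channel EpostL.
Proof.
split; first exact: lin_Epost.
split.
  apply: CP_add; first exact: CP_kraus.
  apply: (@CP_comp _ _ _ _ (fun Y => \sum_y Fy C dW dA y *m Y *m adjmx (Fy C dW dA y)) Gamma).
  - exact: lGamma.
  - apply: (@CP_sum _ _ _ _ (fun y Y => Fy C dW dA y *m Y *m adjmx (Fy C dW dA y))).
    by move=> y; exact: CP_kraus.
  - exact: cGamma.
move=> Y; rewrite /Epost mxtraceD (tGamma hGamma) raddf_sum /=.
rewrite /V0 tr_Sel_conj.
under eq_bigr do rewrite /Fy tr_Sel_conj.
rewrite [RHS]/mxtrace sum_tens -big_split; apply: eq_bigr => y _.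
by rewrite big_ord_recl.
Qed.

Lemma key_eq (N : 'M[C]_dW -> 'M[C]_dY) (lN : linear N) X :
  Rsuper phi Gamma tau N X = EpostL (tmap N (@idmap C k) (EpreL X)).
Proof.
rewrite /Epre tmapD !tmap_tens //.
set A := N (rho1 phi X); set B := N tau; set Z := ZX phi X.
rewrite /Epost.
have h1 : V0 C dW dA dY *m (A *t E00L + B *t Z) *m adjmx (V0 C dW dA dY) = A.
  apply/matrixP => y y'; rewrite Sel_conj mxE !tensmxE /E00 mxE eqxx mulr1.
  rewrite /Z /ZX Sel_adj_conj_out ?mulr0 ?addr0 // => s; exact: neq_lift.
have h2 : \sum_y Fy C dW dA y *m (A *t E00L + B *t Z) *m adjmx (Fy C dW dA y)
    = \tr B *: GmL X.
  apply/matrixP => s s'; rewrite summxE mxE /mxtrace big_distrl; apply: eq_bigr => y _.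
  have hl t : (lift ord0 t == ord0 :> 'I_k) = false.
    by rewrite eq_sym; apply/negbTE/neq_lift.
  rewrite Sel_conj mxE !tensmxE /E00 mxE /emb !hl /= mulr0 add0r.
  congr (_ * _); rewrite /Z /ZX /Sm; exact: (@Sel_adj_conj_in C n k (@emb dW dA) (@emb_inj dW dA) (GmL X) s s').
rewrite h1 h2 (linZ (lGamma hGamma)) /Rsuper tmap_scal_rho1 //.
Qed.

End Final.

Unset Implicit Arguments.
Theorem mainTheorem2 (C : numClosedFieldType) (dW dA dY : nat)
  (phi : 'cV[C]_dA) (hphi : (adjmx phi *m phi) 0 0 = 1)
  (Gamma : 'M[C]_(dW * dA) -> 'M[C]_dY) (hGamma : channel Gamma)
  (tau : 'M[C]_dW) (htau : density tau) :
  superchannel (Rsuper phi Gamma tau) /\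
  ((fun X => Gamma (tmap (@idmap C dW) (Jmap phi) X)) = Gamma ->
     Rsuper phi Gamma tau (S3 phi Gamma) = Gamma).
Proof.
split.
  exists (dW * dA).+1%N, (Epre phi tau), (Epost Gamma); split.
  - exact: CP_Epre.
  - exact: CP_Epost.
  - by move=> N lN X; apply: key_eq.
move=> hJ; apply: functional_extensionality => X.
have lG := lGamma hGamma.
have lS : linear (S3 phi Gamma).
  by move=> a u v; rewrite /S3 tensDl tensZl (linD lG) (linZ lG).
rewrite /Rsuper (tmap_scal_rho1 hphi) // {1}/S3 -(tmapJ1 phi).
rewrite /S3 (tGamma hGamma) trace_tens (trP hphi) mulr1.
have [_ ->] := htau; rewrite scale1r -(linD lG) -tmap_addg.
by have := congr1 (fun f => f X) hJ.
Qed.
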